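(* Let $\overline{H}_n = \sum_{j=1}^n \frac{(-1)^{j-1}}{j}$, let $\{x\} = x - \lfloor x \rfloor$ denote the fractional part, let $\operatorname{Ein}(z) = \int_0^z \frac{1 - e^{-t}}{t}\,dt$, let $\gamma$ be the Euler–Mascheroni constant and let $\delta = \int_0^\infty \frac{e^{-x}}{1+x}\,dx$ be the Euler–Gompertz constant. Then $$\sum_{n = 1}^\infty \frac{\overline{H}_n \{n!\, e \}}{n!} = e \left[\operatorname{Ein}(2) - \gamma\right] - \cosh(1) - \delta + 1.$$ *)

(* Defs.v *)
From Stdlib Require Import Reals Arith.
From Coquelicot Require Import Coquelicot.
Open Scope R_scope.

Definition Hbar (n : nat) : R :=
  match n with
  | O => 0
  | S m => sum_f_R0 (fun k => (-1) ^ k / INR (S k)) m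
  end.

Definition euler_gamma : R :=
  real (Lim_seq (fun n => sum_f_R0 (fun k => / INR (S k)) (pred n) - ln (INR n))).

Definition euler_gompertz : R :=
  RInt_gen (fun x => exp (- x) / (1 + x)) (at_point 0) (Rbar_locally p_infty).

(* Ein(z) = int_0^z (1 - e^{-t})/t dt  (Riemann integral; the integrand
   has a removable singularity at t = 0, irrelevant for the integral) *)
Definition Ein (z : R) : R := RInt (fun t => (1 - exp (- t)) / t) 0 z.

Definition summand (n : nat) : R :=
  Hbar n * frac_part (INR (fact n) * exp 1) / INR (fact n).

(* Main.v *)
Require Import Defs.
From Stdlib Require Import Reals Arith Lra Lia.
From Coquelicot Require Import Coquelicot.
Open Scope R_scope.

Definition sN (N : nat) (y : R) := sum_f_R0 (fun k => y ^ k / INR (fact k)) N.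

Lemma cont_of_der (f : R -> R) (x : R) : ex_derive f x -> continuous f x.
Proof. apply (@ex_derive_continuous R_AbsRing R_NormedModule). Qed.

Lemma RInt_der (f df : R -> R) (a b : R) :
  (forall x, Rmin a b <= x <= Rmax a b -> is_derive f x (df x)) ->
  (forall x, Rmin a b <= x <= Rmax a b -> continuous df x) ->
  is_RInt df a b (f b - f a).
Proof. intros H1 H2. exact (@is_RInt_derive R_CompleteNormedModule f df a b H1 H2). Qed.

Lemma taylor (y : R) (N : nat) :
  is_RInt (fun t => exp t * (y - t) ^ N / INR (fact N)) 0 y (exp y - sN N y).
Proof.
  induction N as [|N IH].
  - apply is_RInt_ext with (f := exp).
    { intros x _. simpl. field. }
    unfold sN; simpl.
    replace (exp y - 1 / 1) with (exp y - exp 0).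
    2:{ rewrite exp_0. field. }
    apply RInt_der.
    + intros x _. apply is_derive_exp.
    + intros x _. apply cont_of_der. auto_derive. auto.
  - set (F := fun t => - exp t * (y - t) ^ (S N) / INR (fact (S N))).
    set (dF := fun t => - exp t * (y - t) ^ (S N) / INR (fact (S N)) + exp t * (y - t) ^ N / INR (fact N)).
    assert (HF : is_RInt dF 0 y (F y - F 0)).
    { apply RInt_der.
      - intros x _. unfold F, dF.
        rewrite fact_simpl, mult_INR.
        assert (INR (fact N) <> 0) by (apply not_0_INR, fact_neq_0).
        set (c := INR (fact N)) in *. clearbody c.
        assert (INR (S N) <> 0) by (apply not_0_INR; lia).
        auto_derive. auto. destruct N. simpl. field. auto.
        rewrite (S_INR (S N)). change ((y - x) ^ S (S N)) with ((y - x) * (y - x) ^ S N). assert (INR (S N) + 1 <> 0) by (pose proof (pos_INR (S N)); lra). set (n := INR (S N)) in *. clearbody n. change (y + - x) with (y - x). field. auto.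
      - intros x _. apply cont_of_der. unfold dF. auto_derive. auto. }
    assert (H2 := is_RInt_minus _ _ _ _ _ _ IH HF).
    apply is_RInt_ext with (f := fun t => minus (exp t * (y - t) ^ N / INR (fact N)) (dF t)).
    { intros x _. unfold dF, minus, plus, opp; simpl. generalize (INR (fact N + N * fact N)) (INR (fact N)); intros. unfold Rdiv; ring. }
    replace (exp y - sN (S N) y) with (minus (exp y - sN N y) (F y - F 0)).
    exact H2.
    unfold F, sN, minus, plus, opp; simpl. rewrite Rminus_diag, Rminus_0_r, exp_0.
    simpl. field. apply not_0_INR. pose proof (fact_neq_0 N). lia.
Qed.

Lemma pow_le1 (x : R) (n : nat) : 0 <= x <= 1 -> x ^ n <= 1.
Proof. intros H. rewrite <- (pow1 n). apply pow_incr. lra. Qed.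

Lemma pow_ge0 (x : R) (n : nat) : 0 <= x -> 0 <= x ^ n.
Proof. intros. apply pow_le. auto. Qed.

Lemma exp_le (x y : R) : x <= y -> exp x <= exp y.
Proof. intros [H|H]. left; apply exp_increasing; auto. subst; lra. Qed.

Definition r (n : nat) := exp 1 - sN n 1.

Lemma r_is (n : nat) :
  is_RInt (fun t => exp t * (1 - t) ^ n / INR (fact n)) 0 1 (r n).
Proof. apply taylor. Qed.

Lemma r_S (n : nat) : r n = r (S n) + / INR (fact (S n)).
Proof. unfold r, sN. change (sum_f_R0 ?f (S n)) with (sum_f_R0 f n + f (S n)). cbv beta. rewrite pow1. unfold Rdiv. ring. Qed.

Lemma ex_r (n : nat) : ex_RInt (fun t => exp t * (1 - t) ^ n / INR (fact n)) 0 1.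
Proof. eexists. apply r_is. Qed.

Lemma r_ge0 (n : nat) : 0 <= r n.
Proof.
  rewrite <- (is_RInt_unique _ _ _ _ (r_is n)).
  apply RInt_ge_0. lra. apply ex_r.
  intros x Hx. apply Rmult_le_pos. apply Rmult_le_pos. left; apply exp_pos.
  apply pow_ge0; lra. left; apply Rinv_0_lt_compat, INR_fact_lt_0.
Qed.

Lemma r_pos (n : nat) : 0 < r n.
Proof. rewrite r_S. pose proof (r_ge0 (S n)). pose proof (INR_fact_lt_0 (S n)).
  pose proof (Rinv_0_lt_compat _ H0). lra. Qed.

Lemma r_le_sup (n : nat) : r n <= 3 / INR (fact n).
Proof.
  rewrite <- (is_RInt_unique _ _ _ _ (r_is n)).
  eapply Rle_trans. apply Rle_abs.
  eapply Rle_trans. apply abs_RInt_le_const with (M := 3 / INR (fact n)). lra. apply ex_r.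
  intros t Ht. pose proof (INR_fact_lt_0 n).
  rewrite Rabs_pos_eq.
  unfold Rdiv. apply Rmult_le_compat_r. left; apply Rinv_0_lt_compat; auto.
  replace 3 with (3 * 1) by ring. apply Rmult_le_compat.
  left; apply exp_pos. apply pow_ge0; lra.
  eapply Rle_trans. 2: apply exp_le_3. apply exp_le; lra.
  apply pow_le1; lra.
  apply Rmult_le_pos. apply Rmult_le_pos. left; apply exp_pos.
  apply pow_ge0; lra. left; apply Rinv_0_lt_compat, INR_fact_lt_0.
  lra.
Qed.

Lemma e_lt_3 : exp 1 < 3.
Proof.
  pose proof (r_le_sup 4). unfold r, sN in H. simpl in H. lra.
Qed.


Lemma fr_is (n : nat) : is_RInt (fun t => exp t * (1 - t) ^ n) 0 1 (INR (fact n) * r n).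
Proof.
  pose proof (is_RInt_scal _ _ _ (INR (fact n)) _ (r_is n)) as H.
  eapply is_RInt_ext. 2: exact H.
  intros x _. unfold scal; simpl. unfold mult; simpl. field. apply INR_fact_neq_0.
Qed.

Lemma fr_lt1 (n : nat) : (1 <= n)%nat -> INR (fact n) * r n < 1.
Proof.
  intros Hn.
  assert (H1 : INR (fact n) * r n <= INR (fact 1) * r 1).
  { rewrite <- (is_RInt_unique _ _ _ _ (fr_is n)), <- (is_RInt_unique _ _ _ _ (fr_is 1)).
    apply RInt_le. lra. eexists; apply fr_is. eexists; apply fr_is.
    intros x Hx. apply Rmult_le_compat_l. left; apply exp_pos.
    destruct n. lia. simpl.
    apply Rmult_le_compat_l. lra. apply pow_le1. lra. }
  assert (E : INR (fact 1) * r 1 = exp 1 - 2) by (unfold r, sN; simpl; field). pose proof e_lt_3. lra.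
Qed.

Fixpoint a (n : nat) : nat := match n with O => 1%nat | S m => (S m * a m + 1)%nat end.

Lemma fact_sN (n : nat) : INR (fact n) * sN n 1 = INR (a n).
Proof.
  induction n as [|n IH].
  - unfold sN. simpl. field.
  - unfold sN. change (sum_f_R0 ?f (S n)) with (sum_f_R0 f n + f (S n)). cbv beta.
    fold (sN n 1). rewrite pow1.
    change (fact (S n)) with (S n * fact n)%nat. change (a (S n)) with (S n * a n + 1)%nat.
    rewrite plus_INR, !mult_INR, <- IH. simpl INR at 4.
    assert (H1 := INR_fact_neq_0 n). assert (H2 : INR (S n) <> 0) by (apply not_0_INR; lia). change (INR 1) with 1. revert H1 H2. generalize (INR (S n)) (INR (fact n)). intros. field. auto.
Qed.

Lemma frac_shift (m : nat) (f : R) : 0 < f < 1 -> frac_part (INR m + f) = f.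
Proof.
  intros Hf. unfold frac_part, Int_part.
  rewrite INR_IZR_INZ.
  assert (H : (Z.of_nat m + 1)%Z = up (IZR (Z.of_nat m) + f)).
  { apply tech_up; rewrite plus_IZR; simpl; lra. }
  rewrite <- H. rewrite minus_IZR, plus_IZR. simpl. ring.
Qed.

Lemma summand_eq (n : nat) : (1 <= n)%nat -> summand n = Hbar n * r n.
Proof.
  intros Hn. unfold summand.
  replace (INR (fact n) * exp 1) with (INR (a n) + INR (fact n) * r n).
  2:{ rewrite <- fact_sN. unfold r. ring. }
  rewrite frac_shift. field. apply INR_fact_neq_0.
  split. apply Rmult_lt_0_compat. apply INR_fact_lt_0. apply r_pos. apply fr_lt1; auto.
Qed.

Definition Q (m : nat) (x : R) := sum_f_R0 (fun k => (- x) ^ k) m.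

Lemma powneg_is (k : nat) : is_RInt (fun x => (- x) ^ k) 0 1 ((-1) ^ k / INR (S k)).
Proof.
  assert (Hk : INR (S k) <> 0) by (apply not_0_INR; lia).
  assert (Hn : INR (S k) = INR k + 1) by apply S_INR.
  set (n := INR (S k)) in *. clearbody n.
  replace ((-1) ^ k / n) with ((fun x => - (- x) ^ (S k) / n) 1 - (fun x => - (- x) ^ (S k) / n) 0).
  2:{ simpl. rewrite Ropp_0, Rmult_0_l. replace (- (1)) with (-1) by lra. field. auto. }
  apply (RInt_der (fun x => - (- x) ^ (S k) / n)).
  - intros x _. auto_derive. auto. destruct k.
    rewrite Hn. simpl. field. rewrite <- Hn. field. auto.
  - intros x _. apply cont_of_der. auto_derive. auto.
Qed.

Lemma Hbar_is (m : nat) : is_RInt (Q m) 0 1 (Hbar (S m)).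
Proof.
  induction m as [|m IH].
  - exact (powneg_is 0).
  - unfold Q, Hbar. 
    eapply is_RInt_ext with (f := fun x => plus (Q m x) ((- x) ^ (S m))).
    { intros x _. reflexivity. }
    change (sum_f_R0 ?f (S m)) with (sum_f_R0 f m + f (S m)).
    apply (is_RInt_plus _ _ _ _ _ _ IH (powneg_is (S m))).
Qed.

Definition Phi (M : nat) (x : R) := sum_f_R0 (fun m => r (S m) * Q m x) M.

Lemma Phi_is (M : nat) : is_RInt (Phi M) 0 1 (sum_f_R0 (fun m => summand (S m)) M).
Proof.
  assert (E : forall m, summand (S m) = scal (r (S m)) (Hbar (S m))).
  { intros m. rewrite summand_eq by lia. unfold scal; simpl; unfold mult; simpl. ring. }
  induction M as [|M IH].
  - simpl. rewrite E. eapply is_RInt_ext. 2: apply (@is_RInt_scal R_NormedModule), Hbar_is.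
    intros x _. unfold Phi. simpl. reflexivity.
  - change (sum_f_R0 ?f (S M)) with (sum_f_R0 f M + f (S M)).
    cbv beta. rewrite (E (S M)).
    eapply is_RInt_ext with (f := fun x => plus (Phi M x) (scal (r (S (S M))) (Q (S M) x))).
    { intros x _. reflexivity. }
    apply (is_RInt_plus _ _ _ _ _ _ IH). apply (@is_RInt_scal R_NormedModule), Hbar_is.
Qed.

Lemma Q_closed (m : nat) (x : R) : (1 + x) * Q m x = 1 - (- x) ^ (S m).
Proof.
  induction m as [|m IH].
  - unfold Q. simpl. ring.
  - unfold Q in *. change (sum_f_R0 ?f (S m)) with (sum_f_R0 f m + f (S m)).
    rewrite Rmult_plus_distr_l, IH. change ((- x) ^ S (S m)) with (- x * (- x) ^ (S m)).
    ring.
Qed.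

Definition T (N : nat) := sum_f_R0 r N.

Lemma Phi_id (M : nat) (x : R) :
  (1 + x) ^ 2 * Phi M x
  = T (S M) * (1 + x) - exp 1 + sN (S M) (- x) + r (S M) * (- x) ^ (S (S M)).
Proof.
  induction M as [|M IH].
  - unfold Phi, T, Q, sN. simpl.
    assert (E0 : r 0 = r 1 + 1) by (rewrite r_S; simpl; field).
    assert (E1 : r 0 = exp 1 - 1) by (unfold r, sN; simpl; field).
    field_simplify. rewrite E0 in *. nra.
  - unfold Phi in *. change (sum_f_R0 ?f (S M)) with (sum_f_R0 f M + f (S M)).
    unfold T in *. change (sum_f_R0 r (S (S M))) with (sum_f_R0 r (S M) + r (S (S M))).
    unfold sN in *. change (sum_f_R0 ?f (S (S M))) with (sum_f_R0 f (S M) + f (S (S M))).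
    cbv beta.
    replace ((1 + x) ^ 2 * (sum_f_R0 (fun m : nat => r (S m) * Q m x) M + r (S (S M)) * Q (S M) x))
      with ((1 + x) ^ 2 * sum_f_R0 (fun m : nat => r (S m) * Q m x) M + (1 + x) * r (S (S M)) * ((1 + x) * Q (S M) x)) by ring.
    rewrite IH, Q_closed. rewrite (r_S (S M)).
    change ((- x) ^ S (S (S M))) with (- x * (- x) ^ (S (S M))).
    assert (HF := INR_fact_neq_0 (S (S M))).
    generalize (INR (fact (S (S M)))) HF ((- x) ^ S (S M)). intros F HF' p.
    field. auto.
Qed.

Lemma ex_RInt_der (f : R -> R) (a b : R) :
  (forall x, Rmin a b <= x <= Rmax a b -> ex_derive f x) -> ex_RInt f a b.
Proof.
  intros H. apply (@ex_RInt_continuous R_CompleteNormedModule).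
  intros z Hz. apply cont_of_der. auto.
Qed.

Lemma taylor_bound (N : nat) (y : R) : -1 <= y <= 0 -> Rabs (exp y - sN N y) <= / INR (fact N).
Proof.
  intros Hy.
  assert (Hex : ex_RInt (fun t => exp t * (y - t) ^ N / INR (fact N)) y 0).
  { apply ex_RInt_swap. eexists. apply taylor. }
  rewrite <- (is_RInt_unique _ _ _ _ (taylor y N)).
  rewrite <- (opp_RInt_swap _ _ _ Hex). unfold opp; simpl. rewrite Rabs_Ropp.
  eapply Rle_trans. apply abs_RInt_le_const with (M := / INR (fact N)). lra. auto.
  intros t Ht. pose proof (INR_fact_lt_0 N).
  unfold Rdiv. rewrite Rabs_mult, Rabs_mult. rewrite (Rabs_pos_eq (/ _)).
  2: left; apply Rinv_0_lt_compat; auto.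
  rewrite <- (Rmult_1_l (/ INR (fact N))) at 2. apply Rmult_le_compat_r.
  left; apply Rinv_0_lt_compat; auto.
  rewrite <- (Rmult_1_l 1). apply Rmult_le_compat; try apply Rabs_pos.
  rewrite Rabs_pos_eq. replace 1 with (exp 0) by apply exp_0. apply exp_le; lra. left; apply exp_pos.
  rewrite <- RPow_abs. apply pow_le1. split. apply Rabs_pos. apply Rabs_le; lra.
  pose proof (INR_fact_lt_0 N). rewrite <- (Rmult_1_l (/ INR (fact N))) at 2.
  apply Rmult_le_compat_r. left; apply Rinv_0_lt_compat; auto. lra.
Qed.

Lemma lim_bound (u : nat -> R) (l K : R) :
  0 <= K -> (forall n, Rabs (u n - l) <= K / INR (S n)) -> is_lim_seq u l.
Proof.
  intros HK H. apply is_lim_seq_spec. intros eps.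
  destruct (nfloor_ex (K / eps)) as [N HN].
  { apply Rmult_le_pos; auto. left; apply Rinv_0_lt_compat, cond_pos. }
  exists N. intros n Hn. eapply Rle_lt_trans. apply H.
  pose proof (cond_pos eps).
  assert (INR N <= INR n) by (apply le_INR; lia).
  rewrite S_INR. pose proof (pos_INR n).
  assert (HK2 : K = eps * (K / eps)) by (field; lra).
  assert (K < eps * (INR n + 1)).
  { rewrite HK2 at 1. apply Rmult_lt_compat_l; lra. }
  apply Rmult_lt_reg_r with (INR n + 1). lra.
  unfold Rdiv. rewrite Rmult_assoc, Rinv_l by lra. lra.
Qed.

Ltac nz := repeat split; try (apply Rgt_not_eq; apply Rlt_gt; repeat apply Rmult_lt_0_compat; lra).

Definition I1 := RInt (fun x => exp (- x) / (1 + x)) 0 1.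
Definition Cc := exp 1 / 2 + / exp 1 / 2 - 1 + I1.
Definition Lsum := exp 1 * ln 2 - Cc.

Lemma I1_ex : ex_RInt (fun x => exp (- x) / (1 + x)) 0 1.
Proof.
  apply ex_RInt_der. intros x Hx. rewrite Rmin_left, Rmax_right in Hx by lra.
  auto_derive. lra.
Qed.

Lemma A_is : is_RInt (fun x => / (1 + x)) 0 1 (ln 2).
Proof.
  replace (ln 2) with (ln (1 + 1) - ln (1 + 0)).
  2:{ rewrite Rplus_0_r, ln_1. replace (1+1) with 2 by ring. ring. }
  apply (RInt_der (fun x => ln (1 + x))).
  - intros x Hx. rewrite Rmin_left, Rmax_right in Hx by lra. auto_derive. lra. field. lra.
  - intros x Hx. rewrite Rmin_left, Rmax_right in Hx by lra. apply cont_of_der. auto_derive. lra.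
Qed.

Definition Bf (x : R) := (exp 1 - exp (- x)) / (1 + x) ^ 2.

Lemma B_is : is_RInt Bf 0 1 Cc.
Proof.
  set (F := fun x => - exp 1 / (1 + x) + exp (- x) / (1 + x)).
  set (dF := fun x => exp 1 / (1 + x) ^ 2 - exp (- x) / (1 + x) - exp (- x) / (1 + x) ^ 2).
  assert (H1 : is_RInt dF 0 1 (F 1 - F 0)).
  { apply RInt_der.
    - intros x Hx. rewrite Rmin_left, Rmax_right in Hx by lra. unfold F, dF. auto_derive. lra.
      field. lra.
    - intros x Hx. rewrite Rmin_left, Rmax_right in Hx by lra. apply cont_of_der. unfold dF.
      auto_derive. nz. }
  assert (H2 := RInt_correct _ _ _ I1_ex). fold I1 in H2.
  assert (H3 := is_RInt_plus _ _ _ _ _ _ H1 H2).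
  eapply is_RInt_ext. 2: { replace Cc with (plus (F 1 - F 0) I1). exact H3.
    unfold Cc, F, plus; simpl. rewrite Ropp_0, exp_0, exp_Ropp. field. apply Rgt_not_eq, exp_pos. }
  intros x Hx. rewrite Rmin_left, Rmax_right in Hx by lra. unfold dF, Bf, plus; simpl. field. lra.
Qed.

Lemma T_formula (M : nat) : T (S M) = INR (M + 2) * r (S M) + sN M 1.
Proof.
  induction M as [|M IH].
  - unfold T, sN. simpl. rewrite (r_S 0). simpl. field.
  - unfold T in *. change (sum_f_R0 r (S (S M))) with (sum_f_R0 r (S M) + r (S (S M))).
    rewrite IH. rewrite (r_S (S M)).
    unfold sN. change (sum_f_R0 ?f (S M)) with (sum_f_R0 f M + f (S M)). cbv beta.
    rewrite pow1.
    change (fact (S (S M))) with (S (S M) * fact (S M))%nat.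
    rewrite mult_INR.
    replace (S M + 2)%nat with (S (S (S M))) by lia. replace (M + 2)%nat with (S (S M)) by lia.
    assert (H1 := INR_fact_neq_0 (S M)). assert (H2 : INR (S (S M)) <> 0) by (apply not_0_INR; lia).
    rewrite (S_INR (S (S M))).
    revert H1 H2. generalize (INR (fact (S M))) (INR (S (S M))). intros. field. auto.
Qed.

Lemma r_lt_fact (n : nat) : (1 <= n)%nat -> r n < / INR (fact n).
Proof.
  intros Hn. pose proof (fr_lt1 n Hn). pose proof (INR_fact_lt_0 n).
  apply Rmult_lt_reg_l with (INR (fact n)); auto. rewrite Rinv_r; lra.
Qed.

Lemma fact_bound (M : nat) : (M + 6 <= 7 * fact M)%nat.
Proof.
  assert (H1 : (1 <= fact M)%nat) by (pose proof (fact_neq_0 M); lia).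
  assert (H2 : (M <= fact M)%nat).
  { induction M. simpl; lia. change (fact (S M)) with (S M * fact M)%nat. 
    pose proof (fact_neq_0 M). nia. }
  lia.
Qed.

Lemma ln2_le1 : ln 2 <= 1.
Proof.
  rewrite <- (ln_exp 1). left. apply ln_increasing. lra.
  pose proof (exp_ineq1 1). lra.
Qed.

Lemma ln2_pos : 0 < ln 2.
Proof. rewrite <- ln_1. apply ln_increasing; lra. Qed.

Lemma partial_lim :
  is_lim_seq (fun M => sum_f_R0 (fun m => summand (S m)) M) Lsum.
Proof.
  apply lim_bound with (K := 7). lra.
  intros M.
  set (P := sum_f_R0 (fun m => summand (S m)) M).
  set (Err := fun x => ((sN (S M) (- x) - exp (- x)) + r (S M) * (- x) ^ (S (S M))) / (1 + x) ^ 2).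
  assert (HE : is_RInt Err 0 1 (P - T (S M) * ln 2 + Cc)).
  { assert (H := is_RInt_plus _ _ _ _ _ _ (is_RInt_minus _ _ _ _ _ _ (Phi_is M)
                   (@is_RInt_scal R_NormedModule _ _ _ (T (S M)) _ A_is)) B_is).
    eapply is_RInt_ext. 2: exact H.
    intros x Hx. rewrite Rmin_left, Rmax_right in Hx by lra.
    assert (Hid := Phi_id M x).
    assert (E : Phi M x = (T (S M) * (1 + x) - exp 1 + sN (S M) (- x) + r (S M) * (- x) ^ S (S M)) / (1 + x) ^ 2).
    { rewrite <- Hid. field. lra. }
    unfold Err, Bf, plus, minus, scal, opp; simpl. unfold mult; simpl. rewrite E. unfold plus; simpl.
    field. lra. }
  assert (Hb : Rabs (P - T (S M) * ln 2 + Cc) <= / INR (fact (S M)) + r (S M)).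
  { rewrite <- (is_RInt_unique _ _ _ _ HE).
    eapply Rle_trans. apply abs_RInt_le_const with (M := / INR (fact (S M)) + r (S M)). lra.
    eexists; exact HE.
    2: lra.
    intros t Ht. unfold Err.
    assert (H1 : Rabs (sN (S M) (- t) - exp (- t)) <= / INR (fact (S M))).
    { rewrite Rabs_minus_sym. apply taylor_bound. lra. }
    assert (H2 : Rabs ((- t) ^ S (S M)) <= 1).
    { rewrite <- RPow_abs. apply pow_le1. split. apply Rabs_pos. rewrite Rabs_left1; lra. }
    assert (H3 : 1 <= (1 + t) ^ 2) by nra.
    pose proof (r_ge0 (S M)).
    unfold Rdiv. rewrite Rabs_mult. rewrite Rabs_inv. rewrite (Rabs_pos_eq ((1 + t) ^ 2)) by nra.
    assert (H4 : / (1 + t) ^ 2 <= 1).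
    { rewrite <- Rinv_1. apply Rinv_le_contravar; lra. }
    assert (H5 : 0 < / (1 + t) ^ 2) by (apply Rinv_0_lt_compat; nra).
    assert (H6 : Rabs (sN (S M) (- t) - exp (- t) + r (S M) * (- t) ^ S (S M)) <= / INR (fact (S M)) + r (S M)).
    { eapply Rle_trans. apply Rabs_triang. rewrite Rabs_mult, (Rabs_pos_eq (r _)) by lra.
      pose proof (Rabs_pos ((- t) ^ S (S M))). nra. }
    pose proof (Rabs_pos (sN (S M) (- t) - exp (- t) + r (S M) * (- t) ^ S (S M))).
    nra. }
  assert (HT : T (S M) - exp 1 = INR (M + 2) * r (S M) - r M).
  { rewrite T_formula. replace (r M) with (exp 1 - sN M 1) by reflexivity. ring. }
  assert (Hr1 : r (S M) < / INR (fact (S M))) by (apply r_lt_fact; lia).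
  assert (Hr0 : r M = r (S M) + / INR (fact (S M))) by apply r_S.
  pose proof (r_ge0 (S M)). pose proof ln2_le1. pose proof ln2_pos.
  set (f := / INR (fact (S M))) in *.
  assert (Hf0 : 0 < f) by (apply Rinv_0_lt_compat, INR_fact_lt_0).
  pose proof (pos_INR M).
  assert (HT2 : Rabs (INR (M + 2) * r (S M) - r M) <= (INR M + 4) * f).
  { rewrite Hr0, plus_INR. simpl (INR 2). apply Rabs_le. split; nra. }
  assert (Habs : Rabs (P - Lsum) <= (INR M + 6) * f).
  { replace (P - Lsum) with ((P - T (S M) * ln 2 + Cc) + (T (S M) - exp 1) * ln 2) by (unfold Lsum; ring).
    eapply Rle_trans. apply Rabs_triang. rewrite Rabs_mult, (Rabs_pos_eq (ln 2)) by lra. rewrite HT.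
    pose proof (Rabs_pos (INR (M + 2) * r (S M) - r M)). nra. }
  eapply Rle_trans. exact Habs.
  assert (HM6 : INR M + 6 <= 7 * INR (fact M)).
  { pose proof (le_INR _ _ (fact_bound M)) as Hfb. rewrite plus_INR, mult_INR in Hfb. simpl (INR 6) in Hfb. simpl (INR 7) in Hfb. lra. }
  unfold f. change (fact (S M)) with (S M * fact M)%nat. rewrite mult_INR.
  pose proof (INR_fact_lt_0 M). assert (0 < INR (S M)) by (apply lt_0_INR; lia).
  rewrite Rinv_mult. unfold Rdiv.
  replace ((INR M + 6) * (/ INR (S M) * / INR (fact M))) with (/ INR (S M) * ((INR M + 6) / INR (fact M))) by (unfold Rdiv; ring).
  rewrite (Rmult_comm 7). apply Rmult_le_compat_l. left; apply Rinv_0_lt_compat; auto.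
  apply Rmult_le_reg_r with (INR (fact M)); auto. unfold Rdiv. rewrite Rmult_assoc, Rinv_l by lra. lra.
Qed.

Definition g (u : R) := exp (- u) / u.
Definition K (b : R) := RInt g 2 b.

Lemma g_ex (a b : R) : 1 <= a -> 1 <= b -> ex_RInt g a b.
Proof.
  intros Ha Hb. apply ex_RInt_der. intros x Hx.
  assert (1 <= x). { destruct (Rle_dec a b). rewrite Rmin_left in Hx; lra. rewrite Rmin_right in Hx; lra. }
  unfold g. auto_derive. lra.
Qed.

Lemma K_diff (a b : R) : 2 <= a <= b -> 0 <= K b - K a <= exp (- a) - exp (- b).
Proof.
  intros H.
  assert (E : K b - K a = RInt g a b).
  { unfold K. rewrite <- (RInt_Chasles g 2 a b). unfold plus; simpl. ring.
    apply g_ex; lra. apply g_ex; lra. }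
  rewrite E. split.
  - apply RInt_ge_0. lra. apply g_ex; lra. intros x Hx. unfold g. apply Rmult_le_pos.
    left; apply exp_pos. left; apply Rinv_0_lt_compat; lra.
  - assert (He : is_RInt (fun u => exp (- u)) a b (exp (- a) - exp (- b))).
    { replace (exp (- a) - exp (- b)) with ((fun u => - exp (- u)) b - (fun u => - exp (- u)) a) by ring.
      apply (RInt_der (fun u => - exp (- u))). intros x _. auto_derive. auto. ring.
      intros x _. apply cont_of_der. auto_derive. auto. }
    rewrite <- (is_RInt_unique _ _ _ _ He). apply RInt_le. lra. apply g_ex; lra.
    eexists; exact He.
    intros x Hx. unfold g. pose proof (exp_pos (- x)).
    rewrite <- (Rmult_1_r (exp (- x))) at 2. unfold Rdiv. apply Rmult_le_compat_l. lra.
    rewrite <- Rinv_1. apply Rinv_le_contravar; lra.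
Qed.

Definition useq (n : nat) := K (INR n + 2).

Lemma useq_fin : ex_finite_lim_seq useq.
Proof.
  apply ex_finite_lim_seq_incr with (M := 1).
  - intros n. unfold useq. rewrite S_INR. pose proof (pos_INR n).
    pose proof (K_diff (INR n + 2) (INR n + 1 + 2)). lra.
  - intros n. unfold useq. pose proof (pos_INR n).
    pose proof (K_diff 2 (INR n + 2)).
    assert (K 2 = 0) by (unfold K; rewrite RInt_point; reflexivity).
    assert (exp (- (INR n + 2)) > 0) by apply exp_pos.
    assert (exp (- (2)) <= 1) by (rewrite <- exp_0; apply exp_le; lra). lra.
Qed.

Definition Lam := real (Lim_seq useq).

Lemma Lam_is : is_lim_seq useq Lam.
Proof.
  destruct useq_fin as [l Hl]. unfold Lam. rewrite (is_lim_seq_unique _ _ Hl). exact Hl.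
Qed.

Lemma Lam_bound (b : R) : 2 <= b -> 0 <= Lam - K b <= exp (- b).
Proof.
  intros Hb.
  destruct (nfloor_ex b) as [N HN]. lra.
  assert (Ev : eventually (fun n => K b <= useq n <= K b + exp (- b))).
  { exists N. intros n Hn. unfold useq. assert (INR N <= INR n) by (apply le_INR; lia).
    pose proof (K_diff b (INR n + 2)). pose proof (exp_pos (- (INR n + 2))). lra. }
  split.
  - assert (H := is_lim_seq_le_loc (fun _ => K b) useq (K b) Lam).
    simpl in H. cut (K b <= Lam). lra. apply H.
    destruct Ev as [N0 HN0]. exists N0. intros n Hn. apply HN0; auto.
    apply is_lim_seq_const. apply Lam_is.
  - assert (H := is_lim_seq_le_loc useq (fun _ => K b + exp (- b)) Lam (K b + exp (- b))).
    simpl in H. cut (Lam <= K b + exp (- b)). lra. apply H.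
    destruct Ev as [N0 HN0]. exists N0. intros n Hn. apply HN0; auto.
    apply Lam_is. apply is_lim_seq_const.
Qed.

Lemma exp_neg_lt (b : R) : 0 < b -> exp (- b) < / b.
Proof.
  intros Hb. rewrite exp_Ropp. apply Rinv_lt_contravar. apply Rmult_lt_0_compat; auto. apply exp_pos.
  pose proof (exp_ineq1 b). lra.
Qed.

Lemma shift_is (b : R) : 1 <= b ->
  is_RInt (fun x => exp (- x) / (1 + x)) 1 b (exp 1 * K (b + 1)).
Proof.
  intros Hb.
  assert (H1 : is_RInt g (1 * 1 + 1) (1 * b + 1) (K (b + 1))).
  { replace (1 * 1 + 1) with 2 by ring. replace (1 * b + 1) with (b + 1) by ring.
    unfold K. apply (@RInt_correct R_CompleteNormedModule). apply g_ex; lra. }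
  assert (H2 := is_RInt_comp_lin _ _ _ _ _ _ H1).
  assert (H3 := @is_RInt_scal R_NormedModule _ _ _ (exp 1) _ H2).
  eapply is_RInt_ext. 2: exact H3.
  intros x Hx. assert (0 < x). { destruct (Rle_dec 1 b). rewrite Rmin_left in Hx; lra. rewrite Rmin_right in Hx; lra. }
  unfold scal, g; simpl. unfold mult; simpl.
  replace (- (1 * x + 1)) with (- x + - (1)) by ring. rewrite exp_plus, exp_Ropp.
  replace (1 * x + 1) with (1 + x) by ring.
  rewrite exp_Ropp. pose proof (exp_pos x). pose proof (exp_pos 1). field. repeat split; apply Rgt_not_eq; lra.
Qed.

Lemma gompertz_val : euler_gompertz = I1 + exp 1 * Lam.
Proof.
  unfold euler_gompertz. apply is_RInt_gen_unique.
  replace (I1 + exp 1 * Lam) with (plus I1 (exp 1 * Lam)) by reflexivity.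
  apply (@is_RInt_gen_Chasles R_NormedModule) with (b := 1); [exact _ | exact _ | | ].
  - apply is_RInt_gen_at_point. apply (@RInt_correct R_CompleteNormedModule), I1_ex.
  - unfold is_RInt_gen, filterlimi, filter_le, filtermapi.
    intros P [eps HP].
    apply Filter_prod with (Q := fun a => a = 1) (R := fun b => Rmax 1 (/ eps) < b).
    + reflexivity.
    + exists (Rmax 1 (/ eps)). auto.
    + intros x y Hx Hy. simpl. subst x.
      assert (Hy1 : 1 < y) by (eapply Rle_lt_trans; [apply Rmax_l | exact Hy]).
      assert (Hy2 : / eps < y) by (eapply Rle_lt_trans; [apply Rmax_r | exact Hy]).
      exists (exp 1 * K (y + 1)). split. apply shift_is; lra.
      apply HP. unfold ball; simpl. unfold AbsRing_ball, abs, minus, plus, opp; simpl.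
      pose proof (Lam_bound (y + 1) ltac:(lra)).
      replace (exp 1 * K (y + 1) + - (exp 1 * Lam)) with (- (exp 1 * (Lam - K (y + 1)))) by ring.
      rewrite Rabs_Ropp, Rabs_pos_eq.
      2: { apply Rmult_le_pos. left; apply exp_pos. lra. }
      assert (exp 1 * exp (- (y + 1)) = exp (- y)).
      { rewrite <- exp_plus. f_equal. ring. }
      pose proof (exp_neg_lt y ltac:(lra)).
      pose proof (cond_pos eps).
      assert (/ y < eps).
      { rewrite <- (Rinv_inv eps). apply Rinv_lt_contravar. apply Rmult_lt_0_compat; try lra.
        apply Rinv_0_lt_compat; lra. auto. }
      pose proof (exp_pos 1). nra.
Qed.

Lemma exp_pow (x : R) (n : nat) : exp x ^ n = exp (INR n * x).
Proof.
  induction n as [|n IH]. simpl. rewrite Rmult_0_l, exp_0. auto.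
  simpl pow. rewrite IH, <- exp_plus, S_INR. f_equal. ring.
Qed.

Lemma bernoulli (a : R) (n : nat) : 0 <= a <= 1 -> 1 - INR n * a <= (1 - a) ^ n.
Proof.
  intros Ha. induction n as [|n IH]. simpl. lra.
  rewrite S_INR. simpl pow.
  pose proof (pow_ge0 (1 - a) n ltac:(lra)).
  destruct (Rle_dec 0 (1 - INR n * a)).
  - pose proof (pos_INR n). nra.
  - nra.
Qed.

Lemma key_ineq (n : nat) (t : R) : (1 <= n)%nat -> 0 <= t <= INR n ->
  (1 - t / INR n) ^ n <= exp (- t) /\ exp (- t) - t ^ 2 * exp (- t) / INR n <= (1 - t / INR n) ^ n.
Proof.
  intros Hn Ht.
  assert (HN : 0 < INR n) by (apply lt_0_INR; lia).
  set (N := INR n) in *.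
  set (y := t / N).
  assert (Hy : 0 <= y <= 1).
  { unfold y. split. apply Rmult_le_pos; [lra | left; apply Rinv_0_lt_compat; lra].
    apply Rmult_le_reg_r with N; auto. unfold Rdiv. rewrite Rmult_assoc, Rinv_l; lra. }
  assert (Hyt : N * y = t) by (unfold y; field; apply Rgt_not_eq; lra).
  split.
  - replace (exp (- t)) with (exp (- y) ^ n).
    2:{ rewrite exp_pow. f_equal. fold N. rewrite <- Hyt. fold N. ring. }
    apply pow_incr. pose proof (exp_ineq1_le (- y)). lra.
  - assert (H1 : 1 - y ^ 2 <= (1 - y) * exp y).
    { pose proof (exp_ineq1_le y). nra. }
    assert (H2 : (1 - y ^ 2) ^ n <= ((1 - y) * exp y) ^ n).
    { apply pow_incr. nra. }
    assert (H3 := bernoulli (y ^ 2) n ltac:(nra)).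
    rewrite Rpow_mult_distr, exp_pow in H2.
    fold N in H2, H3. rewrite Hyt in H2.
    assert (E : N * y ^ 2 = t ^ 2 / N) by (unfold y; field; apply Rgt_not_eq; lra).
    fold N in E. rewrite E in H3.
    assert (Hm : (1 - y) ^ n * exp t * exp (- t) = (1 - y) ^ n).
    { rewrite Rmult_assoc, <- exp_plus, Rplus_opp_r, exp_0. ring. }
    pose proof (exp_pos (- t)).
    assert (H4 : (1 - t ^ 2 / N) * exp (- t) <= (1 - y) ^ n * exp t * exp (- t)).
    { apply Rmult_le_compat_r. lra. lra. }
    rewrite Hm in H4. unfold Rdiv in *. lra.
Qed.

Definition ein (t : R) := (1 - exp (- t)) / t.
Definition ein_c (t : R) := if Req_EM_T t 0 then 1 else ein t.

Lemma ein_c_cont (t : R) : continuous ein_c t.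
Proof.
  destruct (Req_EM_T t 0) as [->|Ht].
  - apply continuity_pt_filterlim.
    unfold continuity_pt, continue_in, limit1_in, limit_in. intros eps Heps.
    destruct (derivable_pt_lim_exp_0 eps Heps) as [delta Hd].
    exists delta. split. apply cond_pos.
    intros x [[_ Hx0] Hx]. simpl in *. unfold R_dist in *.
    unfold ein_c. destruct (Req_EM_T x 0) as [E|E]. congruence.
    destruct (Req_EM_T 0 0) as [_|E']. 2: congruence.
    assert (Hh : - x <> 0) by lra.
    assert (Hh2 : Rabs (- x) < delta) by (rewrite Rabs_Ropp; rewrite Rminus_0_r in Hx; auto).
    specialize (Hd (- x) Hh Hh2). rewrite Rplus_0_l, exp_0 in Hd.
    unfold ein. replace ((1 - exp (- x)) / x) with ((exp (- x) - 1) / - x) by (field; auto).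
    auto.
  - apply continuous_ext_loc with (g := ein).
    + assert (Hp : 0 < Rabs t) by (apply Rabs_pos_lt; auto).
      exists (mkposreal _ Hp). intros y Hy. unfold ein_c.
      destruct (Req_EM_T y 0) as [->|E]; auto.
      exfalso. unfold ball in Hy; simpl in Hy. unfold AbsRing_ball, abs, minus, plus, opp in Hy; simpl in Hy.
      rewrite Rplus_0_l, Rabs_Ropp in Hy. lra.
    + apply cont_of_der. unfold ein. auto_derive. auto.
Qed.

Lemma Ein_c : Ein 2 = RInt ein_c 0 2.
Proof.
  unfold Ein. apply RInt_ext. intros x Hx. rewrite Rmin_left, Rmax_right in Hx by lra.
  unfold ein_c. destruct (Req_EM_T x 0). lra. reflexivity.
Qed.

Lemma ein_c_ex : ex_RInt ein_c 0 2.
Proof. apply (@ex_RInt_continuous R_CompleteNormedModule). intros; apply ein_c_cont. Qed.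

Definition gn (N : R) (m : nat) (t : R) := sum_f_R0 (fun k => (1 - t / N) ^ k / N) m.

Lemma gk_is (N : R) (k : nat) : 0 < N -> is_RInt (fun t => (1 - t / N) ^ k / N) 0 N (/ INR (S k)).
Proof.
  intros HN.
  assert (Hk : INR (S k) <> 0) by (apply not_0_INR; lia).
  assert (Hn : INR (S k) = INR k + 1) by apply S_INR.
  set (s := INR (S k)) in *. clearbody s.
  replace (/ s) with ((fun t => - (1 - t / N) ^ (S k) / s) N - (fun t => - (1 - t / N) ^ (S k) / s) 0).
  2:{ cbv beta. replace (1 - N / N) with 0 by (field; apply Rgt_not_eq; lra).
      replace (1 - 0 / N) with 1 by (field; apply Rgt_not_eq; lra).
      rewrite pow_i by lia. rewrite pow1. field. auto. }
  apply (RInt_der (fun t => - (1 - t / N) ^ (S k) / s)).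
  - intros x _. auto_derive. nz. destruct k.
    rewrite Hn; simpl. field; repeat split; try (apply Rgt_not_eq; lra); auto.
    rewrite <- Hn. replace (1 + - (x * / N)) with (1 - x / N) by (unfold Rdiv; ring). field; repeat split; try (apply Rgt_not_eq; lra); auto.
  - intros x _. apply cont_of_der. auto_derive. nz.
Qed.

Lemma gn_is (N : R) (m : nat) : 0 < N -> is_RInt (gn N m) 0 N (sum_f_R0 (fun k => / INR (S k)) m).
Proof.
  intros HN. induction m as [|m IH].
  - apply gk_is; auto.
  - unfold gn in *. change (sum_f_R0 ?f (S m)) with (sum_f_R0 f m + f (S m)).
    eapply is_RInt_ext with (f := fun x => plus (sum_f_R0 (fun k => (1 - x / N) ^ k / N) m) ((1 - x / N) ^ (S m) / N)).
    { intros x _. reflexivity. }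
    apply (is_RInt_plus _ _ _ _ _ _ IH (gk_is N (S m) HN)).
Qed.

Lemma geo (y : R) (m : nat) : (1 - y) * sum_f_R0 (fun k => y ^ k) m = 1 - y ^ (S m).
Proof.
  induction m as [|m IH]. simpl. ring.
  change (sum_f_R0 ?f (S m)) with (sum_f_R0 f m + f (S m)).
  rewrite Rmult_plus_distr_l, IH. change (y ^ S (S m)) with (y * y ^ (S m)). ring.
Qed.

Lemma gn_closed (N : R) (m : nat) (t : R) : 0 < N -> t <> 0 ->
  gn N m t = (1 - (1 - t / N) ^ (S m)) / t.
Proof.
  intros HN Ht. rewrite <- geo.
  unfold gn, Rdiv. rewrite <- (scal_sum (fun k => (1 - t * / N) ^ k) m (/ N)).
  field; repeat split; try (apply Rgt_not_eq; lra); auto.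
Qed.

Definition Gam := Ein 2 - ln 2 - Lam.

Lemma diff_bounds (n : nat) (t : R) : (1 <= n)%nat -> 0 < t <= INR n ->
  0 <= (exp (- t) - (1 - t / INR n) ^ n) / t <= t * exp (- t) / INR n.
Proof.
  intros Hn Ht. destruct (key_ineq n t Hn ltac:(lra)) as [H1 H2].
  assert (HN : 0 < INR n) by (apply lt_0_INR; lia).
  split.
  - apply Rmult_le_pos. lra. left; apply Rinv_0_lt_compat; lra.
  - apply Rmult_le_reg_r with t. lra. unfold Rdiv.
    replace ((exp (- t) - (1 - t * / INR n) ^ n) * / t * t) with (exp (- t) - (1 - t * / INR n) ^ n) by (field; lra).
    unfold Rdiv in H2. simpl in H2 |- *. nra.
Qed.

Lemma gamma_bound (m : nat) :
  Rabs (sum_f_R0 (fun k => / INR (S k)) (S m) - ln (INR (m + 2)) - Gam) <= 6 / INR (S m).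
Proof.
  set (n := (m + 2)%nat).
  set (N := INR n).
  assert (HN2 : 2 <= N).
  { unfold N, n. rewrite plus_INR. simpl (INR 2). pose proof (pos_INR m). lra. }
  assert (HNS : INR (S m) < N).
  { unfold N, n. rewrite plus_INR, S_INR. simpl (INR 2). lra. }
  assert (HSm : 0 < INR (S m)) by (apply lt_0_INR; lia).
  assert (Hn1 : (1 <= n)%nat) by (unfold n; lia).
  set (Hs := sum_f_R0 (fun k => / INR (S k)) (S m)).
  set (G := gn N (S m)).
  assert (HG : is_RInt G 0 N Hs) by (apply gn_is; lra).
  assert (HGex : ex_RInt G 0 N) by (eexists; exact HG).
  assert (HG02 : ex_RInt G 0 2) by (apply (@ex_RInt_Chasles_1 R_CompleteNormedModule) with N; [lra | auto]).
  assert (HG2N : ex_RInt G 2 N) by (apply (@ex_RInt_Chasles_2 R_CompleteNormedModule) with 0; [lra | auto]).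
  assert (HsE : Hs = RInt G 0 2 + RInt G 2 N).
  { rewrite <- (is_RInt_unique _ _ _ _ HG). rewrite <- (@RInt_Chasles R_CompleteNormedModule G 0 2 N); auto. }
  set (hn := fun t => (1 - t / N) ^ n / t).
  assert (Hhex : ex_RInt hn 2 N).
  { apply ex_RInt_der. intros x Hx. rewrite Rmin_left, Rmax_right in Hx by lra.
    unfold hn. auto_derive. nz. }
  set (Jh := RInt hn 2 N).
  assert (Hinv : is_RInt (fun t => / t) 2 N (ln N - ln 2)).
  { apply (RInt_der ln).
    - intros x Hx. rewrite Rmin_left, Rmax_right in Hx by lra. apply is_derive_ln. lra.
    - intros x Hx. rewrite Rmin_left, Rmax_right in Hx by lra. apply cont_of_der. auto_derive. nz. }
  assert (HG2N' : RInt G 2 N = ln N - ln 2 - Jh).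
  { apply is_RInt_unique.
    assert (H := is_RInt_minus _ _ _ _ _ _ Hinv (@RInt_correct R_CompleteNormedModule _ _ _ Hhex)).
    eapply is_RInt_ext. 2: exact H.
    intros x Hx. rewrite Rmin_left, Rmax_right in Hx by lra.
    unfold G, hn, minus, plus, opp; simpl. rewrite gn_closed by lra.
    replace (S (S m)) with n by (unfold n; lia). field. lra. }
  assert (HKJ : 0 <= K N - Jh <= / N).
  { assert (H := is_RInt_minus _ _ _ _ _ _ (@RInt_correct R_CompleteNormedModule _ _ _ (g_ex 2 N ltac:(lra) ltac:(lra))) (@RInt_correct R_CompleteNormedModule _ _ _ Hhex)).
    fold Jh in H. change (RInt g 2 N) with (K N) in H.
    assert (Hex : ex_RInt (fun y => minus (g y) (hn y)) 2 N) by (eexists; exact H).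
    assert (HV : RInt (fun y => minus (g y) (hn y)) 2 N = K N - Jh) by (apply (@is_RInt_unique R_CompleteNormedModule); exact H). rewrite <- HV. split.
    - apply RInt_ge_0. lra. auto. intros x Hx.
      unfold minus, plus, opp, g, hn; simpl.
      replace (exp (- x) / x + - ((1 - x / N) ^ n / x)) with ((exp (- x) - (1 - x / N) ^ n) / x) by (field; lra).
      apply diff_bounds; auto. unfold N in Hx. lra.
    - set (F := fun t => - (t + 1) * exp (- t) / N).
      assert (HF : is_RInt (fun t => t * exp (- t) / N) 2 N (F N - F 2)).
      { apply RInt_der.
        - intros x _. unfold F. auto_derive. nz. field. lra.
        - intros x _. apply cont_of_der. auto_derive. nz. }
      eapply Rle_trans. apply RInt_le with (g := fun t => t * exp (- t) / N). lra. auto.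
      eexists; exact HF.
      intros x Hx. unfold minus, plus, opp, g, hn; simpl.
      replace (exp (- x) / x + - ((1 - x / N) ^ n / x)) with ((exp (- x) - (1 - x / N) ^ n) / x) by (field; lra).
      apply diff_bounds; auto. unfold N in Hx. lra.
      rewrite (is_RInt_unique _ _ _ _ HF). unfold F.
      assert (H3 : 3 * exp (- (2)) <= 1).
      { rewrite exp_Ropp. pose proof (exp_ineq1 2 ltac:(lra)). pose proof (exp_pos 2).
        apply Rmult_le_reg_r with (exp 2); auto. rewrite Rmult_assoc, Rinv_l by lra. lra. }
      pose proof (exp_pos (- N)).
      apply Rmult_le_reg_r with N. lra. unfold Rdiv.
      rewrite Rinv_l by lra. field_simplify; try lra. nra. }
  assert (HE1 : Rabs (RInt G 0 2 - Ein 2) <= 4 / N).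
  { rewrite Ein_c.
    assert (H := is_RInt_minus _ _ _ _ _ _ (@RInt_correct R_CompleteNormedModule _ _ _ HG02) (@RInt_correct R_CompleteNormedModule _ _ _ ein_c_ex)).
    assert (HV : RInt (fun y => minus (G y) (ein_c y)) 0 2 = RInt G 0 2 - RInt ein_c 0 2) by (apply (@is_RInt_unique R_CompleteNormedModule); exact H). rewrite <- HV.
    replace (4 / N) with ((2 - 0) * (2 / N)) by (field; lra).
    apply abs_RInt_le_const. lra. eexists; exact H.
    intros t Ht. unfold minus, plus, opp; simpl.
    destruct (Req_EM_T t 0) as [->|Ht0].
    - unfold ein_c. destruct (Req_EM_T 0 0); [|congruence].
      unfold G, gn. 
      rewrite (sum_eq _ (fun _ => / N)).
      2:{ intros i _. replace (1 - 0 / N) with 1 by (field; lra). rewrite pow1. unfold Rdiv. ring. }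
      rewrite sum_cte. replace (INR (S (S m))) with N by (unfold N, n; f_equal; lia).
      rewrite Rinv_l by lra. rewrite Rplus_opp_r, Rabs_R0. apply Rmult_le_pos. lra. left; apply Rinv_0_lt_compat; lra.
    - unfold ein_c. destruct (Req_EM_T t 0); [congruence|].
      unfold G, ein. rewrite gn_closed by lra.
      replace (S (S m)) with n by (unfold n; lia).
      replace ((1 - (1 - t / N) ^ n) / t + - ((1 - exp (- t)) / t)) with ((exp (- t) - (1 - t / N) ^ n) / t) by (field; lra).
      destruct (diff_bounds n t Hn1 ltac:(unfold N in *; lra)) as [D1 D2].
      fold N in D1, D2. rewrite Rabs_pos_eq by lra. eapply Rle_trans. apply D2.
      assert (exp (- t) <= 1) by (rewrite <- exp_0; apply exp_le; lra).
      unfold Rdiv. apply Rmult_le_compat_r. left; apply Rinv_0_lt_compat; lra.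
      pose proof (exp_pos (- t)). nra. }
  assert (HL := Lam_bound N HN2).
  assert (HeN : exp (- N) < / N) by (apply exp_neg_lt; lra).
  unfold Gam. rewrite HsE, HG2N'.
  replace (RInt G 0 2 + (ln N - ln 2 - Jh) - ln N - (Ein 2 - ln 2 - Lam))
    with ((RInt G 0 2 - Ein 2) + (Lam - K N) + (K N - Jh)) by ring.
  eapply Rle_trans. apply Rabs_triang. eapply Rle_trans. apply Rplus_le_compat_r. apply Rabs_triang.
  rewrite (Rabs_pos_eq (Lam - K N)) by lra. rewrite (Rabs_pos_eq (K N - Jh)) by lra.
  assert (6 / N <= 6 / INR (S m)).
  { unfold Rdiv. apply Rmult_le_compat_l. lra. apply Rinv_le_contravar; lra. }
  unfold Rdiv in *. lra.
Qed.

Lemma gamma_val : euler_gamma = Gam.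
Proof.
  unfold euler_gamma.
  assert (H : is_lim_seq (fun n => sum_f_R0 (fun k => / INR (S k)) (pred n) - ln (INR n)) Gam).
  { apply (is_lim_seq_incr_n _ 2). apply lim_bound with (K := 6). lra.
    intros m. replace (pred (m + 2)) with (S m) by lia. apply gamma_bound. }
  rewrite (is_lim_seq_unique _ _ H). reflexivity.
Qed.

Theorem mainTheorem9 :
  is_series (fun n => summand (S n))
    (exp 1 * (Ein 2 - euler_gamma) - cosh 1 - euler_gompertz + 1).
Proof.
  assert (H : is_lim_seq (sum_n (fun n => summand (S n))) Lsum).
  { eapply is_lim_seq_ext. 2: apply partial_lim. intros n. symmetry. apply sum_n_Reals. }
  replace (exp 1 * (Ein 2 - euler_gamma) - cosh 1 - euler_gompertz + 1) with Lsum.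
  exact H.
  rewrite gamma_val, gompertz_val. unfold Gam, Lsum, Cc, cosh. rewrite exp_Ropp.
  field. apply Rgt_not_eq, exp_pos.
Qed.
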